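(* For all positive integers $m$ and all $p,q\in[0,1]$, \[ \ell_1(\mathrm{Bin}(m,p),\mathrm{Bin}(m,q))\ge\frac1{350}\min\left(m|p-q|,\frac{\sqrt m\,|p-q|}{\sqrt{p(1-p)}},1\right). \]
   Context: $\ell_1(P,Q)=\sum_x|P(x)-Q(x)|$. When $p(1-p)=0$ the middle term is interpreted as $+\infty$ if $p\ne q$. *)

(* Defs.v *)
From Stdlib Require Import Reals.
Open Scope R_scope.

Definition binom_pmf (m : nat) (p : R) (k : nat) : R :=
  Binomial.C m k * p ^ k * (1 - p) ^ (m - k).

Definition l1_binom (m : nat) (p q : R) : R :=
  sum_f_R0 (fun k => Rabs (binom_pmf m p k - binom_pmf m q k)) m.

(* min(m|p-q|, sqrt m |p-q| / sqrt(p(1-p)), 1), where the middle term is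
   +infinity when p(1-p)=0 (and p<>q), i.e. it is dropped from the min.
   When p(1-p)=0 and p=q the first term is 0 so the min is 0 under any
   interpretation of the middle term. *)
Definition rhs_min (m : nat) (p q : R) : R :=
  if Req_EM_T (p * (1 - p)) 0 then Rmin (INR m * Rabs (p - q)) 1
  else Rmin (Rmin (INR m * Rabs (p - q))
                  (sqrt (INR m) * Rabs (p - q) / sqrt (p * (1 - p)))) 1.

(* Main.v *)
Require Import Defs.
From Stdlib Require Import Reals Lra Lia Arith ZArith.
From Coquelicot Require Import Coquelicot.
Open Scope R_scope.

Lemma sum_ext (f g : nat -> R) N : (forall i, (i <= N)%nat -> f i = g i) ->
  sum_f_R0 f N = sum_f_R0 g N.
Proof. apply sum_eq. Qed.

Lemma sum_lin (f g : nat -> R) a b N :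
  sum_f_R0 (fun k => a * f k + b * g k) N = a * sum_f_R0 f N + b * sum_f_R0 g N.
Proof. induction N; simpl; [ring| rewrite IHN; ring]. Qed.

Lemma sum_lin3 (f g h : nat -> R) a b c N :
  sum_f_R0 (fun k => a * f k + b * g k + c * h k) N = a * sum_f_R0 f N + b * sum_f_R0 g N + c * sum_f_R0 h N.
Proof. induction N; simpl; [ring| rewrite IHN; ring]. Qed.

Lemma sum_le (f g : nat -> R) N : (forall i, (i <= N)%nat -> f i <= g i) ->
  sum_f_R0 f N <= sum_f_R0 g N.
Proof. intros H. apply sum_Rle. auto. Qed.

Lemma C_shift1 n j : (j <= n)%nat ->
  INR (S j) * Binomial.C (S n) (S j) = INR (S n) * Binomial.C n j.
Proof.
  intros Hj. unfold Binomial.C.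
  replace (S n - S j)%nat with (n - j)%nat by lia.
  rewrite !fact_simpl, !mult_INR.
  assert (H1 := INR_fact_neq_0 j). assert (H2 := INR_fact_neq_0 (n-j)).
  assert (H3 : INR (S j) <> 0) by (apply not_0_INR; lia).
  field. auto.
Qed.

Lemma C_shift2 n k : (k <= n)%nat ->
  INR (S n - k) * Binomial.C (S n) k = INR (S n) * Binomial.C n k.
Proof.
  intros Hk. unfold Binomial.C.
  replace (S n - k)%nat with (S (n - k))%nat by lia.
  rewrite !fact_simpl, !mult_INR.
  assert (H1 := INR_fact_neq_0 k). assert (H2 := INR_fact_neq_0 (n-k)).
  assert (H3 : INR (S (n-k)) <> 0) by (apply not_0_INR; lia).
  field. auto.
Qed.

Lemma S0 n t : sum_f_R0 (fun k => binom_pmf n t k) n = 1.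
Proof.
  unfold binom_pmf. rewrite <- binomial. replace (t + (1 - t)) with 1 by ring.
  apply pow1.
Qed.

Lemma pmf_shift n t j : (j <= n)%nat ->
  INR (S j) * binom_pmf (S n) t (S j) = INR (S n) * t * binom_pmf n t j.
Proof.
  intros Hj. unfold binom_pmf.
  replace (S n - S j)%nat with (n - j)%nat by lia.
  replace (INR (S j) * (Binomial.C (S n) (S j) * t ^ S j * (1 - t) ^ (n - j)))
    with ((INR (S j) * Binomial.C (S n) (S j)) * t * t ^ j * (1 - t) ^ (n - j))
    by (simpl; ring).
  rewrite C_shift1 by exact Hj. ring.
Qed.

Lemma S1 n t : sum_f_R0 (fun k => INR k * binom_pmf n t k) n = INR n * t.
Proof.
  destruct n as [|n].
  - simpl. ring.
  - rewrite decomp_sum by lia. simpl Init.Nat.pred.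
    rewrite (sum_ext _ (fun i => (INR (S n) * t) * binom_pmf n t i + 0 * 0)).
    2:{ intros i Hi. rewrite pmf_shift by exact Hi. ring. }
    rewrite sum_lin, S0. simpl INR at 1. ring.
Qed.

Lemma S2 n t : sum_f_R0 (fun k => INR k * (INR k - 1) * binom_pmf n t k) n
  = INR n * (INR n - 1) * t ^ 2.
Proof.
  destruct n as [|n].
  - simpl. ring.
  - rewrite decomp_sum by lia. simpl Init.Nat.pred.
    rewrite (sum_ext _ (fun i => (INR (S n) * t) * (INR i * binom_pmf n t i) + 0 * 0)).
    2:{ intros i Hi. replace (INR (S i) - 1) with (INR i) by (rewrite S_INR; ring).
        replace (INR (S i) * INR i * binom_pmf (S n) t (S i)) with
          (INR i * (INR (S i) * binom_pmf (S n) t (S i))) by ring.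
        rewrite pmf_shift by exact Hi. ring. }
    rewrite sum_lin, S1. rewrite S_INR. simpl INR at 1. ring.
Qed.

Lemma Var n t : sum_f_R0 (fun k => (INR k - INR n * t) ^ 2 * binom_pmf n t k) n
  = INR n * t * (1 - t).
Proof.
  rewrite (sum_ext _ (fun k => 1 * (INR k * (INR k - 1) * binom_pmf n t k)
     + (1 - 2 * INR n * t) * (INR k * binom_pmf n t k) + (INR n * t)^2 * binom_pmf n t k)).
  2:{ intros. ring. }
  rewrite sum_lin3, S2, S1, S0. ring.
Qed.

Definition Pd m x k := Binomial.C m k * INR k * x^(pred k) * (1-x)^(m-k).
Definition Qd m x k := Binomial.C m k * INR (m-k) * x^k * (1-x)^(pred (m-k)).

Lemma deriv_term m k x : is_derive (fun t => binom_pmf m t k) x (Pd m x k - Qd m x k).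
Proof. unfold binom_pmf. auto_derive; [trivial|]. unfold Pd, Qd, Rminus. ring. Qed.

Lemma deriv_sum (g : nat -> R) m x N :
  is_derive (fun t => sum_f_R0 (fun k => g k * binom_pmf m t k) N) x
    (sum_f_R0 (fun k => g k * (Pd m x k - Qd m x k)) N).
Proof.
  induction N.
  - simpl. apply (is_derive_scal (fun t => binom_pmf m t 0)). apply deriv_term.
  - simpl. apply (is_derive_plus (fun t => sum_f_R0 (fun k => g k * binom_pmf m t k) N)
       (fun t => g (S N) * binom_pmf m t (S N))). exact IHN.
    apply (is_derive_scal (fun t => binom_pmf m t (S N))). apply deriv_term.
Qed.

Lemma deriv_val (g : nat -> R) n x :
  sum_f_R0 (fun k => g k * (Pd (S n) x k - Qd (S n) x k)) (S n)
  = INR (S n) * sum_f_R0 (fun j => (g (S j) - g j) * binom_pmf n x j) n.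
Proof.
  rewrite (sum_ext _ (fun k => 1 * (g k * Pd (S n) x k) + (-1) * (g k * Qd (S n) x k)))
    by (intros; ring).
  rewrite sum_lin.
  rewrite decomp_sum by lia. simpl Init.Nat.pred.
  replace (sum_f_R0 (fun k => g k * Qd (S n) x k) (S n)) with
    (sum_f_R0 (fun k => g k * Qd (S n) x k) n + g (S n) * Qd (S n) x (S n)) by reflexivity.
  replace (Qd (S n) x (S n)) with 0 by (unfold Qd; rewrite Nat.sub_diag; simpl; ring).
  replace (Pd (S n) x 0) with 0 by (unfold Pd; simpl; ring).
  rewrite (sum_ext (fun i => g (S i) * Pd (S n) x (S i))
     (fun i => INR (S n) * g (S i) * binom_pmf n x i)).
  2:{ intros i Hi. unfold Pd, binom_pmf. simpl pred.
      replace (S n - S i)%nat with (n - i)%nat by lia.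
      replace (g (S i) * (Binomial.C (S n) (S i) * INR (S i) * x ^ i * (1 - x) ^ (n - i)))
        with (g (S i) * (INR (S i) * Binomial.C (S n) (S i)) * x ^ i * (1 - x) ^ (n - i)) by ring.
      rewrite C_shift1 by lia. ring. }
  rewrite (sum_ext (fun k => g k * Qd (S n) x k)
     (fun i => INR (S n) * g i * binom_pmf n x i)).
  2:{ intros i Hi. unfold Qd, binom_pmf.
      replace (pred (S n - i))%nat with (n - i)%nat by lia.
      replace (g i * (Binomial.C (S n) i * INR (S n - i) * x ^ i * (1 - x) ^ (n - i)))
        with (g i * (INR (S n - i) * Binomial.C (S n) i) * x ^ i * (1 - x) ^ (n - i)) by ring.
      rewrite C_shift2 by lia. ring. }
  rewrite (sum_ext (fun j => (g (S j) - g j) * binom_pmf n x j)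
     (fun j => 1 * (g (S j) * binom_pmf n x j) + (-1) * (g j * binom_pmf n x j))) by (intros; ring).
  rewrite sum_lin.
  rewrite (sum_ext (fun i => INR (S n) * g (S i) * binom_pmf n x i)
     (fun i => INR (S n) * (g (S i) * binom_pmf n x i) + 0 * 0)) by (intros; ring).
  rewrite (sum_ext (fun i => INR (S n) * g i * binom_pmf n x i)
     (fun i => INR (S n) * (g i * binom_pmf n x i) + 0 * 0)) by (intros; ring).
  rewrite !sum_lin. ring.
Qed.

Definition gw (A J k : nat) : R := INR (Nat.min (k - A) J).

Lemma sum_scal (f : nat -> R) a N : sum_f_R0 (fun k => a * f k) N = a * sum_f_R0 f N.
Proof. induction N; simpl; [ring| rewrite IHN; ring]. Qed.

Lemma C_nonneg n k : 0 <= Binomial.C n k.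
Proof.
  unfold Binomial.C. apply Rmult_le_pos. apply pos_INR.
  apply Rlt_le, Rinv_0_lt_compat, Rmult_lt_0_compat; apply INR_fact_lt_0.
Qed.

Lemma pmf_nonneg n t k : 0 <= t <= 1 -> 0 <= binom_pmf n t k.
Proof.
  intros Ht. unfold binom_pmf. apply Rmult_le_pos; [apply Rmult_le_pos|].
  apply C_nonneg. apply pow_le; lra. apply pow_le; lra.
Qed.

Lemma dg_ge A J n x s j : s > 0 -> (A = 0%nat \/ INR A <= INR n * x - s) ->
  INR (A + J) >= INR n * x + s ->
  gw A J (S j) - gw A J j >= 1 - (INR j - INR n * x)^2 / s^2.
Proof.
  intros Hs HA HB. unfold gw.
  assert (Hs2 : 0 < s^2) by (apply pow_lt; lra).
  destruct (le_lt_dec A j) as [H1|H1]; [destruct (lt_dec j (A+J)) as [H2|H2]|].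
  - replace (Nat.min (S j - A) J) with (S (Nat.min (j - A) J)) by lia.
    rewrite S_INR.
    assert (0 <= (INR j - INR n * x)^2 / s^2).
    { unfold Rdiv. apply Rmult_le_pos. apply pow2_ge_0. apply Rlt_le, Rinv_0_lt_compat; lra. }
    lra.
  - assert (Hle : INR (Nat.min (j - A) J) <= INR (Nat.min (S j - A) J)) by (apply le_INR; lia).
    assert (Hj : INR (A + J) <= INR j) by (apply le_INR; lia).
    assert (Hy : s^2 <= (INR j - INR n * x)^2) by nra.
    assert (1 <= (INR j - INR n * x)^2 / s^2).
    { apply (Rmult_le_reg_r (s^2)); auto. unfold Rdiv. rewrite Rmult_assoc, Rinv_l by lra. lra. }
    lra.
  - assert (Hle : INR (Nat.min (j - A) J) <= INR (Nat.min (S j - A) J)) by (apply le_INR; lia).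
    destruct HA as [HA|HA]; [lia|].
    assert (Hj : INR (S j) <= INR A) by (apply le_INR; lia). rewrite S_INR in Hj.
    assert (Hy : s^2 <= (INR j - INR n * x)^2) by nra.
    assert (1 <= (INR j - INR n * x)^2 / s^2).
    { apply (Rmult_le_reg_r (s^2)); auto. unfold Rdiv. rewrite Rmult_assoc, Rinv_l by lra. lra. }
    lra.
Qed.

Lemma deriv_lb A J n x s : 0 <= x <= 1 -> s > 0 -> (A = 0%nat \/ INR A <= INR n * x - s) ->
  INR (A + J) >= INR n * x + s -> INR n * x * (1 - x) <= s^2 / 2 ->
  sum_f_R0 (fun j => (gw A J (S j) - gw A J j) * binom_pmf n x j) n >= 1/2.
Proof.
  intros Hx Hs HA HB HV.
  assert (Hs2 : 0 < s^2) by (apply pow_lt; lra).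
  apply Rle_ge. eapply Rle_trans.
  2:{ apply sum_le. intros i _. apply Rmult_le_compat_r. apply pmf_nonneg; auto.
      apply Rge_le, (dg_ge A J n x s i); auto. }
  rewrite (sum_ext _ (fun i => 1 * binom_pmf n x i + (- / s^2) * ((INR i - INR n * x) ^ 2 * binom_pmf n x i)))
    by (intros; unfold Rdiv; ring).
  rewrite sum_lin, S0, Var.
  assert (INR n * x * (1 - x) / s^2 <= 1/2).
  { apply (Rmult_le_reg_r (s^2)); auto. unfold Rdiv. rewrite Rmult_assoc, Rinv_l by lra. lra. }
  unfold Rdiv in *. lra.
Qed.

Definition FF A J m t := sum_f_R0 (fun k => gw A J k * binom_pmf m t k) m.

Lemma F_incr A J n lo hi s : 0 <= lo -> lo < hi -> hi <= 1 -> s > 0 ->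
  (A = 0%nat \/ INR A <= INR n * lo - s) -> INR (A + J) >= INR n * hi + s ->
  (forall t, lo <= t <= hi -> INR n * t * (1 - t) <= s^2/2) ->
  FF A J (S n) hi - FF A J (S n) lo >= INR (S n) / 2 * (hi - lo).
Proof.
  intros H0 H1 H2 Hs HA HB HV.
  destruct (MVT_cor2 (FF A J (S n))
     (fun c => INR (S n) * sum_f_R0 (fun j => (gw A J (S j) - gw A J j) * binom_pmf n c j) n)
     lo hi H1) as [c [Hc1 Hc2]].
  { intros c Hc. apply is_derive_Reals. unfold FF. rewrite <- deriv_val. apply deriv_sum. }
  rewrite Hc1.
  assert (Hn := pos_INR n).
  assert (Hl : INR n * lo <= INR n * c) by (apply Rmult_le_compat_l; lra).
  assert (Hh : INR n * c <= INR n * hi) by (apply Rmult_le_compat_l; lra).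
  assert (sum_f_R0 (fun j => (gw A J (S j) - gw A J j) * binom_pmf n c j) n >= 1/2).
  { apply (deriv_lb A J n c s); try lra.
    - destruct HA as [HA|HA]; [left; auto| right; lra].
    - apply HV. lra. }
  assert (HSn := pos_INR (S n)).
  set (X := sum_f_R0 _ n) in *.
  assert (INR (S n) * X >= INR (S n) * (1/2)) by (apply Rmult_ge_compat_l; lra).
  apply Rle_ge. apply Rmult_le_compat_r; lra.
Qed.

Lemma l1_vs_F A J m lo hi :
  FF A J m hi - FF A J m lo <= l1_binom m lo hi * (INR J / 2).
Proof.
  assert (E : FF A J m hi - FF A J m lo =
    sum_f_R0 (fun k => (gw A J k - INR J / 2) * (binom_pmf m hi k - binom_pmf m lo k)) m).
  { rewrite (sum_ext _ (fun k => 1 * (gw A J k * binom_pmf m hi k) + (-1) * (gw A J k * binom_pmf m lo k)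
       + (- (INR J / 2)) * (1 * binom_pmf m hi k + (-1) * binom_pmf m lo k))) by (intros; ring).
    rewrite sum_lin3, sum_lin, !S0. unfold FF. ring. }
  rewrite E. eapply Rle_trans. apply Rle_abs. eapply Rle_trans. apply sum_f_R0_triangle.
  unfold l1_binom. rewrite Rmult_comm, <- sum_scal. apply sum_le. intros i _.
  rewrite Rabs_mult, (Rabs_minus_sym (binom_pmf m hi i)).
  apply Rmult_le_compat_r. apply Rabs_pos.
  assert (0 <= gw A J i <= INR J).
  { unfold gw. split. apply pos_INR. apply le_INR. lia. }
  apply Rabs_le. lra.
Qed.

Lemma key n lo hi s A J : 0 <= lo -> lo < hi -> hi <= 1 -> s > 0 ->
  (A = 0%nat \/ INR A <= INR n * lo - s) -> INR (A + J) >= INR n * hi + s ->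
  (forall t, lo <= t <= hi -> INR n * t * (1 - t) <= s^2/2) ->
  l1_binom (S n) lo hi * INR J >= INR (S n) * (hi - lo).
Proof.
  intros. pose proof (F_incr A J n lo hi s) as HF.
  pose proof (l1_vs_F A J (S n) lo hi). 
  assert (FF A J (S n) hi - FF A J (S n) lo >= INR (S n) / 2 * (hi - lo)) by auto.
  lra.
Qed.

Lemma nat_floor x : 0 <= x -> exists N : nat, INR N <= x < INR N + 1.
Proof.
  intros Hx. destruct (archimed x) as [H1 H2].
  assert (Hz : (0 < up x)%Z) by (apply lt_0_IZR; lra).
  exists (Z.to_nat (up x - 1)).
  rewrite INR_IZR_INZ, Z2Nat.id by lia. rewrite minus_IZR. simpl. lra.
Qed.

Lemma nat_ceil y : 0 <= y -> exists N : nat, y <= INR N <= y + 1.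
Proof.
  intros Hy. destruct (archimed y) as [H1 H2].
  assert (Hz : (0 < up y)%Z) by (apply lt_0_IZR; lra).
  exists (Z.to_nat (up y)).
  rewrite INR_IZR_INZ, Z2Nat.id by lia. lra.
Qed.

Lemma l1_nonneg m p q : 0 <= l1_binom m p q.
Proof.
  unfold l1_binom. apply cond_pos_sum. intros; apply Rabs_pos.
Qed.

Lemma sq_sqrt x : 0 <= x -> sqrt x ^ 2 = x.
Proof. intros. simpl. rewrite Rmult_1_r. apply sqrt_sqrt; auto. Qed.

Lemma core n p lo hi : 0 <= lo -> lo < hi -> hi <= 1 -> lo <= p <= hi ->
  let a := INR (S n) * (hi - lo) in
  let s := sqrt (2 * (INR (S n) * (p * (1 - p)) + a)) in
  l1_binom (S n) lo hi * (a + 2 * s + 2) >= a.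
Proof.
  intros H0 H1 H2 Hp a s.
  assert (Hm : 0 < INR (S n)) by (apply lt_0_INR; lia).
  assert (Hn : 0 <= INR n) by apply pos_INR.
  assert (HSn : INR (S n) = INR n + 1) by apply S_INR.
  assert (Ha : 0 < a) by (unfold a; nra).
  assert (Hpp : 0 <= p * (1 - p)) by nra.
  assert (Hb : 0 <= INR (S n) * (p * (1 - p))) by nra.
  assert (Hs : 0 < s) by (unfold s; apply sqrt_lt_R0; nra).
  assert (Hs2 : s ^ 2 = 2 * (INR (S n) * (p * (1 - p)) + a)) by (unfold s; apply sq_sqrt; nra).
  assert (HV : forall t, lo <= t <= hi -> INR n * t * (1 - t) <= s^2/2).
  { intros t Ht. rewrite Hs2.
    assert (t * (1 - t) <= p * (1 - p) + (hi - lo)).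
    { assert (E : t * (1 - t) - p * (1 - p) = (t - p) * (1 - t - p)) by ring.
      destruct (Rle_dec p t); nra. }
    assert (0 <= t * (1 - t)) by nra.
    unfold a. nra. }
  destruct (Rle_dec (INR n * lo - s) 0) as [Hx|Hx].
  - destruct (nat_ceil (INR n * hi + s)) as [J [HJ1 HJ2]]; [nra|].
    assert (Hk := key n lo hi s 0 J H0 H1 H2 Hs (or_introl eq_refl)).
    rewrite Nat.add_0_l in Hk.
    assert (l1_binom (S n) lo hi * INR J >= INR (S n) * (hi - lo)) by (apply Hk; auto; lra).
    assert (INR J <= a + 2 * s + 2) by (unfold a; rewrite HSn; lra).
    assert (0 <= l1_binom (S n) lo hi) by apply l1_nonneg.
    fold a in H.
    assert (l1_binom (S n) lo hi * INR J <= l1_binom (S n) lo hi * (a + 2 * s + 2))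
      by (apply Rmult_le_compat_l; lra).
    lra.
  - destruct (nat_floor (INR n * lo - s)) as [A [HA1 HA2]]; [lra|].
    destruct (nat_ceil (INR n * hi + s - INR A)) as [J [HJ1 HJ2]]; [nra|].
    assert (Hk := key n lo hi s A J H0 H1 H2 Hs (or_intror HA1)).
    rewrite plus_INR in Hk.
    assert (l1_binom (S n) lo hi * INR J >= INR (S n) * (hi - lo)) by (apply Hk; auto; lra).
    assert (INR J <= a + 2 * s + 2) by (unfold a; rewrite HSn; lra).
    assert (0 <= l1_binom (S n) lo hi) by apply l1_nonneg.
    fold a in H.
    assert (l1_binom (S n) lo hi * INR J <= l1_binom (S n) lo hi * (a + 2 * s + 2))
      by (apply Rmult_le_compat_l; lra).
    lra.
Qed.

Lemma l1_sym m p q : l1_binom m p q = l1_binom m q p.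
Proof. unfold l1_binom. apply sum_ext. intros. apply Rabs_minus_sym. Qed.

Lemma rhs_props m p q : 0 <= INR m ->
  rhs_min m p q <= INR m * Rabs (p - q) /\ rhs_min m p q <= 1 /\
  (0 < INR m * (p * (1 - p)) ->
     rhs_min m p q <= INR m * Rabs (p - q) / sqrt (INR m * (p * (1 - p)))).
Proof.
  intros Hm. unfold rhs_min. destruct (Req_EM_T (p * (1 - p)) 0) as [E|E].
  - split; [apply Rmin_l|split; [apply Rmin_r|]]. intros H. rewrite E in H. lra.
  - split; [|split; [apply Rmin_r|]].
    + eapply Rle_trans. apply Rmin_l. apply Rmin_l.
    + intros H.
      assert (Hpp : 0 < p * (1 - p)).
      { destruct (Rlt_dec 0 (p * (1 - p))); auto.
        apply Rnot_lt_le in n. nra. }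
      assert (Hm' : 0 < INR m) by (destruct (Req_dec (INR m) 0) as [Z|Z]; [rewrite Z in H; lra | lra]).
      replace (INR m * Rabs (p - q) / sqrt (INR m * (p * (1 - p)))) with
        (sqrt (INR m) * Rabs (p - q) / sqrt (p * (1 - p))).
      * eapply Rle_trans. apply Rmin_l. apply Rmin_r.
      * rewrite (sqrt_mult_alt (INR m)) by lra.
        assert (H1 : 0 < sqrt (INR m)) by (apply sqrt_lt_R0; lra).
        assert (H2 : 0 < sqrt (p * (1 - p))) by (apply sqrt_lt_R0; lra).
        assert (H3 := sqrt_sqrt (INR m) Hm).
        rewrite <- H3 at 2. field. split; lra.
Qed.

Lemma fin a b l1 r s : 0 < a -> 0 <= b -> s = sqrt (2 * (b + a)) -> 0 <= l1 ->
  l1 * (a + 2 * s + 2) >= a -> r <= a -> r <= 1 -> (0 < b -> r <= a / sqrt b) ->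
  l1 >= / 350 * r.
Proof.
  intros Ha Hb Hs Hl H Hra Hr1 Hrb.
  assert (Hs0 : 0 <= s) by (rewrite Hs; apply sqrt_pos).
  set (D := a + 2 * s + 2) in *.
  assert (HD : 0 < D) by (unfold D; lra).
  assert (Key : r * D <= 7 * a).
  { destruct (Rle_dec b (a * a)) as [Hb1|Hb1].
    - destruct (Rle_dec 1 a) as [Ha1|Ha1].
      + assert (s <= 2 * a).
        { rewrite Hs. apply Rle_trans with (sqrt ((2 * a) * (2 * a))); [apply sqrt_le_1_alt; nra | rewrite sqrt_square; lra]. }
        assert (r * D <= 1 * D) by (apply Rmult_le_compat_r; lra).
        unfold D in *. lra.
      + apply Rnot_le_lt in Ha1. assert (a * a <= a) by nra. assert (s <= 2).
        { rewrite Hs. apply Rle_trans with (sqrt (2 * 2)); [apply sqrt_le_1_alt; lra | rewrite sqrt_square; lra]. }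
        assert (r * D <= a * D) by (apply Rmult_le_compat_r; lra).
        assert (a * D <= a * 7) by (apply Rmult_le_compat_l; unfold D; lra).
        lra.
    - apply Rnot_le_lt in Hb1. destruct (Rle_dec 1 b) as [Hb2|Hb2].
      + set (sb := sqrt b).
        assert (Hsb : sb * sb = b) by (apply sqrt_sqrt; lra).
        assert (Hsb1 : 1 <= sb) by (unfold sb; rewrite <- sqrt_1; apply sqrt_le_1_alt; lra).
        assert (Hasb : a <= sb) by nra.
        assert (s <= 2 * sb).
        { rewrite Hs. apply Rle_trans with (sqrt ((2 * sb) * (2 * sb))); [apply sqrt_le_1_alt; nra | rewrite sqrt_square; lra]. }
        assert (Hr : r <= a / sb) by (apply Hrb; lra).
        assert (0 <= a / sb) by (apply Rlt_le, Rdiv_lt_0_compat; lra).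
        assert (r * D <= a / sb * D) by (apply Rmult_le_compat_r; lra).
        assert (a / sb * D <= a / sb * (7 * sb)) by (apply Rmult_le_compat_l; unfold D; lra).
        assert (a / sb * (7 * sb) = 7 * a) by (field; lra).
        lra.
      + apply Rnot_le_lt in Hb2. assert (a < 1) by nra.
        assert (s <= 2).
        { rewrite Hs. apply Rle_trans with (sqrt (2 * 2)); [apply sqrt_le_1_alt; nra | rewrite sqrt_square; lra]. }
        assert (r * D <= a * D) by (apply Rmult_le_compat_r; lra).
        assert (a * D <= a * 7) by (apply Rmult_le_compat_l; unfold D; lra).
        lra. }
  destruct (Rle_dec r 0).
  - lra.
  - assert (r * D <= 7 * (l1 * D)) by lra.
    assert (r <= 7 * l1).
    { apply (Rmult_le_reg_r D); auto. lra. }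
    lra.
Qed.

Theorem lemma8 (m : nat) (p q : R) :
  (0 < m)%nat -> 0 <= p <= 1 -> 0 <= q <= 1 ->
  l1_binom m p q >= / 350 * rhs_min m p q.
Proof.
  intros Hm Hp Hq.
  destruct m as [|n]; [lia|].
  assert (Hm0 : 0 < INR (S n)) by (apply lt_0_INR; lia).
  destruct (rhs_props (S n) p q) as [R1 [R2 R3]]; [lra|].
  assert (Hl := l1_nonneg (S n) p q).
  assert (Hpp : 0 <= p * (1 - p)) by nra.
  assert (Hb : 0 <= INR (S n) * (p * (1 - p))) by nra.
  destruct (Rtotal_order p q) as [Hpq|[Hpq|Hpq]].
  - assert (Hab : Rabs (p - q) = q - p) by (rewrite Rabs_minus_sym; apply Rabs_right; lra).
    rewrite Hab in *.
    pose proof (core n p p q ltac:(lra) Hpq ltac:(lra) ltac:(lra)) as Hc. cbv zeta in Hc.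
    apply (fin (INR (S n) * (q - p)) (INR (S n) * (p * (1 - p))) _ _
       (sqrt (2 * (INR (S n) * (p * (1 - p)) + INR (S n) * (q - p))))); auto.
    all: try nra.
  - subst q. rewrite Rminus_diag, Rabs_R0, Rmult_0_r in R1. lra.
  - assert (Hab : Rabs (p - q) = p - q) by (apply Rabs_right; lra).
    rewrite Hab in *. rewrite l1_sym.
    pose proof (core n p q p ltac:(lra) Hpq ltac:(lra) ltac:(lra)) as Hc. cbv zeta in Hc.
    apply (fin (INR (S n) * (p - q)) (INR (S n) * (p * (1 - p))) _ _
       (sqrt (2 * (INR (S n) * (p * (1 - p)) + INR (S n) * (p - q))))); auto.
    all: try nra.
    all: apply l1_nonneg.
Qed.
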